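(* Let $(P,\preceq)$ be a poset, $\mathcal{X}:=\{X\subseteq P\mid (X,\preceq)\text{ well-ordered}\}$, $\Lambda$ a set, $\mathcal{I},\mathcal{O}\subseteq\Lambda$ finite disjoint sets, $s$ a causal $(\mathcal{I},\mathcal{O})$-system over $\mathcal{X}$, $i\in\mathcal{I}$, $o\in\mathcal{O}$. For $\mathbf{X}\in\mathcal{X}^{\mathcal{I}\setminus\{i\}}$ let $\phi(\mathbf{X})$ denote the unique $X_i\in\mathcal{X}$ with $s(\mathbf{X}\cup\{(i,X_i)\})(o)=X_i$. Then for all $\mathbf{X},\mathbf{X}'\in\mathcal{X}^{\mathcal{I}\setminus\{i\}}$ and all $y\in\phi(\mathbf{X})\mathbin{\triangle}\phi(\mathbf{X}')$ there exist $i'\in\mathcal{I}\setminus\{i\}$ and $x\in\mathbf{X}(i')\mathbin{\triangle}\mathbf{X}'(i')$ with $x\prec y$.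
   Context: $\mathcal{X}^{\mathcal{I}}$ is the set of functions $\mathcal{I}\to\mathcal{X}$. $\mathbin{\triangle}$ denotes symmetric difference; $x\prec y$ means $x\preceq y$ and $x\ne y$. A causal $(\mathcal{I},\mathcal{O})$-system over $\mathcal{X}$ is a function $s:\mathcal{X}^{\mathcal{I}}\to\mathcal{X}^{\mathcal{O}}$ such that for all $\mathbf{X},\mathbf{X}'\in\mathcal{X}^{\mathcal{I}}$, $o\in\mathcal{O}$, $y\in s(\mathbf{X})(o)\mathbin{\triangle}s(\mathbf{X}')(o)$ there exist $i\in\mathcal{I}$ and $x\in\mathbf{X}(i)\mathbin{\triangle}\mathbf{X}'(i)$ with $x\prec y$. (For such systems the fixed point $\phi(\mathbf{X})$ exists and is unique.) *)

(* Defs.v *)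
From Stdlib Require Import List ClassicalDescription.
Set Implicit Arguments.

Definition is_poset (P : Type) (le : P -> P -> Prop) : Prop :=
  (forall x, le x x) /\
  (forall x y, le x y -> le y x -> x = y) /\
  (forall x y z, le x y -> le y z -> le x z).

Definition slt (P : Type) (le : P -> P -> Prop) (x y : P) : Prop := le x y /\ x <> y.

Definition symdiff (T : Type) (A B : T -> Prop) (x : T) : Prop :=
  (A x /\ ~ B x) \/ (B x /\ ~ A x).

Definition well_ordered (P : Type) (le : P -> P -> Prop) (X : P -> Prop) : Prop :=
  (forall x y, X x -> X y -> le x y \/ le y x) /\
  (forall S : P -> Prop, (forall x, S x -> X x) -> (exists x, S x) ->
     exists m, S m /\ forall x, S x -> le m x).

Definition WO (P : Type) (le : P -> P -> Prop) : Type :=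
  { X : P -> Prop | well_ordered le X }.

Definition finite_set (L : Type) (A : L -> Prop) : Prop :=
  exists l : list L, forall x, A x -> In x l.

Definition elems (L : Type) (A : L -> Prop) : Type := { l : L | A l }.

Definition causal (P : Type) (le : P -> P -> Prop) (L : Type) (I O : L -> Prop)
  (s : (elems I -> WO le) -> (elems O -> WO le)) : Prop :=
  forall (X X' : elems I -> WO le) (o : elems O) (y : P),
    symdiff (proj1_sig (s X o)) (proj1_sig (s X' o)) y ->
    exists (i : elems I) (x : P),
      symdiff (proj1_sig (X i)) (proj1_sig (X' i)) x /\ slt le x y.

Definition Iminus (L : Type) (I : L -> Prop) (i : L) : L -> Prop :=
  fun l => I l /\ l <> i.

(* X \cup {(i, Xi)} : the extension of X : I\{i} -> WO to I *)
Definition extend (P : Type) (le : P -> P -> Prop) (L : Type) (I : L -> Prop)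
  (i : elems I) (X : elems (Iminus I (proj1_sig i)) -> WO le) (Xi : WO le)
  : elems I -> WO le :=
  fun j =>
    match excluded_middle_informative (proj1_sig j = proj1_sig i) with
    | left _ => Xi
    | right h => X (exist _ (proj1_sig j) (conj (proj2_sig j) h))
    end.

(* Main.v *)
Require Import Defs.
From Stdlib Require Import Classical ClassicalDescription.

Lemma min_union (P : Type) (le : P -> P -> Prop) (A B S : P -> Prop) :
  is_poset le -> well_ordered le A -> well_ordered le B ->
  (forall x, S x -> A x \/ B x) -> (exists x, S x) ->
  exists m, S m /\ forall w, S w -> ~ slt le w m.
Proof.
  intros [Hr [Ha Ht]] [_ WA] [_ WB] HS [x0 Hx0].
  assert (HBmin : (exists x, S x /\ B x) ->
     exists m2, (S m2 /\ B m2) /\ forall w, S w /\ B w -> le m2 w).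
  { intros Hex. apply WB; [intros x [_ H]; exact H | exact Hex]. }
  destruct (classic (exists x, S x /\ A x)) as [HexA | HnA].
  - destruct (WA (fun x => S x /\ A x)) as [m1 [[Sm1 Am1] Hm1]];
      [intros x [_ H]; exact H | exact HexA |].
    destruct (classic (exists w, S w /\ slt le w m1)) as [[w [Sw [Hwle Hwne]]] | Hno].
    + assert (Bw : B w).
      { destruct (HS w Sw) as [Aw|Bw]; auto.
        exfalso; apply Hwne; apply Ha; auto. }
      destruct (HBmin (ex_intro _ w (conj Sw Bw))) as [m2 [[Sm2 Bm2] Hm2]].
      exists m2; split; auto. intros w' Sw' [H1 H2].
      destruct (HS w' Sw') as [Aw'|Bw'].
      * apply H2. apply Ha; auto.
        apply Ht with m1; [|auto].
        apply Ht with w; auto.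
      * apply H2. apply Ha; auto.
    + exists m1; split; auto. intros w Sw Hs. apply Hno; eauto.
  - destruct (HBmin) as [m2 [[Sm2 Bm2] Hm2]].
    { exists x0; split; auto. destruct (HS x0 Hx0); auto. exfalso; eauto. }
    exists m2; split; auto. intros w Sw [H1 H2].
    assert (Bw : B w) by (destruct (HS w Sw); auto; exfalso; eauto).
    apply H2. apply Ha; auto.
Qed.

Theorem lemma6p5 (P : Type) (le : P -> P -> Prop) (L : Type) (I O : L -> Prop)
  (s : (elems I -> WO le) -> (elems O -> WO le)) (i : elems I) (o : elems O) :
  is_poset le ->
  finite_set I -> finite_set O ->
  (forall l, I l -> O l -> False) ->
  causal s ->
  forall (X X' : elems (Iminus I (proj1_sig i)) -> WO le) (phiX phiX' : WO le),
    s (extend i X phiX) o = phiX ->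
    s (extend i X' phiX') o = phiX' ->
    forall y : P, symdiff (proj1_sig phiX) (proj1_sig phiX') y ->
    exists (i' : elems (Iminus I (proj1_sig i))) (x : P),
      symdiff (proj1_sig (X i')) (proj1_sig (X' i')) x /\ slt le x y.
Proof.
  intros Hpo _ _ _ Hc X X' phiX phiX' E1 E2 y Hy.
  pose (good := fun y => exists (i' : elems (Iminus I (proj1_sig i))) (x : P),
      symdiff (proj1_sig (X i')) (proj1_sig (X' i')) x /\ slt le x y).
  change (good y).
  apply NNPP; intro Hbad.
  destruct (@min_union P le (proj1_sig phiX) (proj1_sig phiX')
     (fun z => symdiff (proj1_sig phiX) (proj1_sig phiX') z /\ ~ good z)
     Hpo (proj2_sig phiX) (proj2_sig phiX')) as [m [[Dm Gm] Hm]].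
  { intros x [[[H _]|[H _]] _]; auto. }
  { exists y; auto. }
  apply Gm.
  pose proof (Hc (extend i X phiX) (extend i X' phiX') o m) as Hcm.
  rewrite E1, E2 in Hcm. destruct (Hcm Dm) as [j [x [Hx Hxm]]].
  unfold extend in Hx.
  destruct (excluded_middle_informative (proj1_sig j = proj1_sig i)) as [e|n].
  - destruct (classic (good x)) as [Gx|NGx].
    + destruct Gx as [i' [x' [Hx' Hlt]]]. exists i', x'. split; auto.
      destruct Hpo as [_ [Ha Ht]]. destruct Hlt as [l1 n1]. destruct Hxm as [l2 n2].
      split; [eauto|]. intro eq; subst x'. apply n2. apply Ha; auto.
    + exfalso. apply (Hm x); auto.
  - exists (exist _ (proj1_sig j) (conj (proj2_sig j) n)), x. auto.
Qed.
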